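(* In the setting of the Causal Complementation Theorem (with $\hat a\ne 0$, $\hat d\ge 0$, $F_0,F_1$ causal not both zero with $\gcd(F_0,F_1)=z^{-d_F}$, $0\le d_F\le\hat d$, $0\le M\le \hat d-d_F$, $\ell$ such that $\widetilde F_\ell=z^{d_F}F_\ell$ is left-justified, and $(R_0,R_1)$ the unique causal complement to $(F_0,F_1)$ for $\hat a z^{-\hat d}$ that is degree-reducing modulo $M$ in $F_\ell$), let $k>0$ be an integer and suppose $z^{-(M+k)}\mid R_\ell$. Then, with $\ell'=1-\ell$, we have $z^{-(M+k)}\mid R_{\ell'}$ if and only if $\hat{d}-d_F\geq M+k$.
   Context: A causal filter is a polynomial in $z^{-1}$ with complex coefficients; $\deg$ denotes degree in $z^{-1}$; divisibility and gcd are in $\mathbb{C}[z^{-1}]$. A causal filter $F$ is left-justified if its constant term is nonzero. $(R_0,R_1)$ is a causal complement to $(F_0,F_1)$ for $\hat{a}z^{-\hat{d}}$ if $R_0,R_1$ are causal and $F_0R_1-F_1R_0=\hat{a}z^{-\hat{d}}$; it is degree-reducing modulo $M$ in $F_\ell$ if $z^{-M}$ divides both $R_0,R_1$ and $\deg(R_\ell)<\deg(F_\ell)-\deg\gcd(F_0,F_1)+M$. *)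

(* Defs.v *)
(* Causal filters = polynomials in the indeterminate
   'X standing for z^{-1}, with complex coefficients R[i], R : realType. *)
From mathcomp Require Import all_boot all_algebra.
From mathcomp Require Import reals.
From mathcomp.real_closed Require Import complex.
Set Implicit Arguments. Unset Strict Implicit. Unset Printing Implicit Defensive.
Import GRing.Theory.
Local Open Scope ring_scope.

Section CausalFilters.
Variable C : fieldType.

(* degree in z^{-1}; the zero polynomial gets degree -1 (any value < 0 works
   equally well for the strict inequality below, as it plays the role of -oo) *)
Definition pdeg (p : {poly C}) : int := (size p)%:Z - 1.

Definition left_justified (F : {poly C}) : bool := F`_0 != 0.

Definition causal_complement (F0 F1 R0 R1 : {poly C}) (a : C) (d : nat) :=
  F0 * R1 - F1 * R0 = a *: 'X^d.

Definition sel (l : bool) (P0 P1 : {poly C}) : {poly C} := if l then P1 else P0.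

Definition degree_reducing (F0 F1 R0 R1 : {poly C}) (M : nat) (l : bool) :=
  ('X^M %| R0) && ('X^M %| R1) &&
  (pdeg (sel l R0 R1) < pdeg (sel l F0 F1) - pdeg (gcdp F0 F1) + M%:Z).

End CausalFilters.

(* Main.v *)
Require Import Defs.
From mathcomp Require Import all_boot all_algebra.
From mathcomp Require Import reals.
From mathcomp.real_closed Require Import complex.
From mathcomp Require Import zify ring.
Import GRing.Theory.
Local Open Scope ring_scope.

Lemma core (K : fieldType) (A B P Q Ft : {poly K}) (c : K) (d dF n : nat) :
  c != 0 -> (dF <= d)%N -> A = Ft * 'X^dF -> Ft`_0 != 0 -> 'X^dF %| B ->
  'X^n %| P -> A * Q - B * P = c *: 'X^d ->
  ('X^n %| Q <-> (n <= d - dF)%N).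
Proof.
move=> c0 le hA hF hB hP hE; split.
- move=> hQ.
  have hA' : 'X^dF %| A by rewrite hA dvdp_mull.
  have h1 : 'X^dF * 'X^n %| c *: 'X^d.
    by rewrite -hE dvdp_sub // dvdp_mul.
  rewrite dvdpZr // -exprD in h1.
  have := dvdp_leq (monic_neq0 (monicXn K d)) h1.
  rewrite !size_polyXn; lia.
- move=> hn.
  case/dvdpP: hB => B' hB'.
  have e : Ft * Q = c *: 'X^(d - dF) + B' * P.
    apply: (@mulfI _ ('X^dF : {poly K})); first exact: monic_neq0 (monicXn K dF).
    rewrite mulrDr -scalerAr -exprD subnKC // -hE hA hB'; ring.
  have cop : coprimep 'X^n Ft.
    apply: coprimep_expl; rewrite coprimep_sym.
    have -> : ('X : {poly K}) = 'X - 0%:P by rewrite subr0.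
    by rewrite coprimep_XsubC rootE horner_coef0.
  rewrite -(Gauss_dvdpr _ cop) e dvdp_add //.
    by rewrite dvdpZr // dvdp_exp2l.
  exact: dvdp_mull.
Qed.

Theorem mainTheorem4 (R : realType) (F0 F1 R0 R1 : {poly R[i]})
  (ahat : R[i]) (dhat dF M : nat) (l : bool) (k : nat) :
  ahat != 0 ->
  (F0 != 0) || (F1 != 0) ->
  gcdp F0 F1 %= 'X^dF ->
  (dF <= dhat)%N ->
  (M <= dhat - dF)%N ->
  (exists2 Ft : {poly R[i]}, Ft * 'X^dF = sel l F0 F1 & left_justified Ft) ->
  causal_complement F0 F1 R0 R1 ahat dhat ->
  degree_reducing F0 F1 R0 R1 M l ->
  (0 < k)%N ->
  'X^(M + k) %| sel l R0 R1 ->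
  ('X^(M + k) %| sel (~~ l) R0 R1 <-> (M + k <= dhat - dF)%N).
Proof.
move=> a0 _ hg le _ [Ft hFt hL] hC _ _ hR.
have d0 : 'X^dF %| F0 by rewrite -(eqp_dvdl _ hg) dvdp_gcdl.
have d1 : 'X^dF %| F1 by rewrite -(eqp_dvdl _ hg) dvdp_gcdr.
rewrite /left_justified in hL; rewrite /causal_complement in hC.
case: l hFt hR => /= hFt hR.
- have := @core _ F1 F0 R1 R0 Ft (- ahat) dhat dF (M + k).
  move=> H; apply: H.
  + by rewrite oppr_eq0.
  + exact: le.
  + by rewrite hFt.
  + exact: hL.
  + exact: d0.
  + exact: hR.
  + by rewrite scaleNr -hC opprB.
- have := @core _ F0 F1 R0 R1 Ft ahat dhat dF (M + k).
  move=> H; apply: H.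
  + exact: a0.
  + exact: le.
  + by rewrite hFt.
  + exact: hL.
  + exact: d1.
  + exact: hR.
  + exact: hC.
Qed.
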